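(* Let $G$ be a $1$-tuple regular finite group and let $N$ be a subgroup of $G$ that is a union of order classes. Then $C_G(N)$ is also a union of order classes.
   Context: A subgroup $N$ of $G$ is a union of order classes if for every $n\in\mathbb{N}$ it contains either all or none of the elements of order $n$ of $G$. A finite group $G$ is $1$-tuple regular if for all $g_1,h_1\in G$ of the same order there is a bijection $\Psi\colon G\to G$ such that for every $g\in G$ the assignment $g_1\mapsto h_1, g\mapsto\Psi(g)$ defines an isomorphism $\langle g_1,g\rangle\to\langle h_1,\Psi(g)\rangle$. *)

(* Defs.v *)
From mathcomp Require Import all_boot all_fingroup.
Set Implicit Arguments. Unset Strict Implicit. Unset Printing Implicit Defensive.
Import GroupScope.
Local Open Scope group_scope.

Definition union_of_order_classes (gT : finGroupType) (G N : {set gT}) : Prop :=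
  forall n : nat,
    (forall x, x \in G -> #[x] = n -> x \in N) \/
    (forall x, x \in G -> #[x] = n -> x \notin N).

Definition pair_assignment_isom (gT : finGroupType) (a g b g' : gT) : Prop :=
  exists f : {morphism <<[set a; g]>> >-> gT},
    [/\ isom <<[set a; g]>> <<[set b; g']>> f, f a = b & f g = g'].

Definition one_tuple_regular (gT : finGroupType) (G : {group gT}) : Prop :=
  forall g1 h1, g1 \in G -> h1 \in G -> #[g1] = #[h1] ->
    exists Psi : gT -> gT,
      [/\ {in G, forall g, Psi g \in G},
          {in G &, injective Psi}
        &          (forall g, g \in G -> pair_assignment_isom g1 g h1 (Psi g)) ].

(* Main.v *)
Require Import Defs.
From mathcomp Require Import all_boot all_fingroup.
Import GroupScope.

Lemma key (gT : finGroupType) (G N : {group gT}) g1 h1 :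
  one_tuple_regular G -> N \subset G -> union_of_order_classes G N ->
  g1 \in 'C_G(N) -> h1 \in G -> #[g1] = #[h1] -> h1 \in 'C_G(N).
Proof.
move=> reg sNG ocN /setIP [g1G cg1] h1G oeq.
have [Psi [PsiG Psiinj Psiiso]] := reg g1 h1 g1G h1G oeq.
have prop : forall g, g \in N ->
    Psi g \in N /\ commute h1 (Psi g).
  move=> g gN; have gG := subsetP sNG g gN.
  have [f [/isomP [injf _] fa fg]] := Psiiso g gG.
  have ag : g1 \in <<[set g1; g]>> by apply: mem_gen; rewrite !inE eqxx.
  have gg : g \in <<[set g1; g]>> by apply: mem_gen; rewrite !inE eqxx orbT.
  split.
    have ord : #[Psi g] = #[g] by rewrite -fg order_injm.
    case: (ocN #[g]) => H.
      by apply: H; [exact: PsiG|].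
    by move: (H g gG erefl); rewrite gN.
  rewrite /commute -fa -fg -!morphM //.
  by rewrite (centP cg1 g gN).
have sub : Psi @: N \subset N.
  by apply/subsetP => y /imsetP [g gN ->]; case: (prop g gN).
have card : #|Psi @: N| = #|N|.
  apply: card_in_imset => x y xN yN; apply: Psiinj; exact: (subsetP sNG).
have eqN : Psi @: N = N by apply/eqP; rewrite eqEcard sub card leqnn.
rewrite inE h1G; apply/centP => n nN.
move: nN; rewrite -eqN => /imsetP [g gN ->].
by case: (prop g gN) => _ c; apply/esym.
Qed.

Theorem lemma3p4 (gT : finGroupType) (G N : {group gT}) :
  one_tuple_regular G -> N \subset G -> union_of_order_classes G N ->
  union_of_order_classes G 'C_G(N).
Proof.
move=> reg sNG ocN n.
case: (boolP [exists x in 'C_G(N), #[x] == n]).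
  move=> /existsP [y /andP [yC /eqP yn]]; left => x xG xn.
  exact: (@key _ G N y x reg sNG ocN yC xG (etrans yn (esym xn))).
move=> /existsPn H; right => x xG xn; apply/negP => xC.
by move: (H x); rewrite xC xn eqxx.
Qed.
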